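(* Let $d\ge 2$ and $n\ge 2d$ be integers. Suppose $\mathcal{H}\subseteq\binom{[n]}{d}$ is an intersecting family (any two members intersect) with $|\mathcal{H}|\ge 6n^{d-2}$. Then there exist an element $\ell\in[n]$ and sets $A_1,\dots,A_{d+1}\in\mathcal{H}$ such that (1) $\ell\in A$ for all $A\in\mathcal{H}$, and (2) the sets $A_1\setminus\{\ell\},\dots,A_{d+1}\setminus\{\ell\}$ are pairwise disjoint.
   Context: $\binom{[n]}{d}$ denotes the family of all $d$-element subsets of $[n]$. *)

(* Defs.v *)
From mathcomp Require Import all_boot.
Set Implicit Arguments. Unset Strict Implicit. Unset Printing Implicit Defensive.

Definition uniform (n d : nat) (H : {set {set 'I_n}}) : Prop :=
  forall A, A \in H -> #|A| = d.

Definition intersecting (n : nat) (H : {set {set 'I_n}}) : Prop :=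
  forall A B, A \in H -> B \in H -> A :&: B != set0.

(* Main.v *)
Require Import Defs.
From mathcomp Require Import all_boot.
From mathcomp Require Import zify.
Set Implicit Arguments. Unset Strict Implicit. Unset Printing Implicit Defensive.

Lemma card_bigcup_le (I T : finType) (P : pred I) (F : I -> {set T}) :
  #|\bigcup_(i | P i) F i| <= \sum_(i | P i) #|F i|.
Proof.
elim/big_rec2: _ => [|i m U _ le]; first by rewrite cards0.
by rewrite (leq_trans (leq_card_setU _ _).1) ?leq_add2l.
Qed.

Lemma count_sup n d (H : {set {set 'I_n}}) (S : {set 'I_n}) :
  uniform d H -> #|[set B in H | S \subset B]| <= 'C(n - #|S|, d - #|S|).
Proof.
move=> uH.
set D := [set B in H | S \subset B].
have inj : {in D &, injective (fun B => B :\: S)}.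
  move=> B1 B2; rewrite !inE => /andP[_ s1] /andP[_ s2] e.
  have K (X : {set 'I_n}) : S \subset X -> S :|: (X :\: S) = X.
    move=> sX; apply/setP => x; rewrite !inE.
    by case xS: (x \in S) => //=; rewrite (subsetP sX _ xS).
  by rewrite -(K _ s1) -(K _ s2) e.
rewrite -(card_in_imset inj).
have -> : n - #|S| = #|~: S| by have := cardsC S; rewrite card_ord; lia.
rewrite -cards_draws; apply: subset_leq_card; apply/subsetP => X.
case/imsetP => B; rewrite /D inE => /andP[BH sB] ->.
rewrite !inE; apply/andP; split.
  by apply/subsetP => x; rewrite !inE => /andP[].
by rewrite cardsD (setIidPr sB) (uH _ BH).
Qed.

Lemma count_big n d (H : {set {set 'I_n}}) (S : {set 'I_n}) :
  uniform d H -> d < #|S| -> #|[set B in H | S \subset B]| = 0.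
Proof.
move=> uH lt; apply/eqP; rewrite cards_eq0; apply/eqP/setP => B; rewrite !inE.
apply/negbTE/negP => /andP[BH sB].
by move: (subset_leq_card sB); rewrite (uH _ BH) leqNgt lt.
Qed.

Lemma cover_step n (H : {set {set 'I_n}}) (S C : {set 'I_n}) :
  intersecting H -> C \in H ->
  #|[set B in H | S \subset B]| <= \sum_(z in C) #|[set B in H | z |: S \subset B]|.
Proof.
move=> iH CH; apply: (leq_trans _ (card_bigcup_le _ _)); apply: subset_leq_card.
apply/subsetP => B; rewrite inE => /andP[BH sB].
have /set0Pn[z] := iH _ _ BH CH; rewrite inE => /andP[zB zC].
by apply/bigcupP; exists z => //; rewrite inE BH subUset sub1set zB.
Qed.

Lemma bin_pow m k : 'C(m, k) * k`! <= m ^ k.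
Proof.
rewrite bin_ffact; elim: k m => [|k IH] m; first by [].
rewrite ffactnS expnS leq_mul2l; apply/orP; right.
apply: leq_trans (IH _) _; elim: k {IH} => [|k IHk] //; by rewrite !expnS leq_mul ?leq_pred.
Qed.

Lemma pow_lt a b k : a < b -> 0 < k -> a ^ k < b ^ k.
Proof. by move=> ab k0; rewrite ltn_exp2r. Qed.

Lemma fact_b1 k : 1 <= k -> (k+2)*(k+1) <= 6 * k`!.
Proof.
elim: k => [//|k IH] _; case: k IH => [|k] IH; first by [].
have := leq_mul (leqnn k.+2) (IH isT); rewrite [(k.+2)`!]factS; nia.
Qed.

Lemma fact_b2 k : 3 <= k -> (k+3)^2 <= 12 * k`!.
Proof.
elim: k => [//|k IH] k3; have [k2|k3'] := leqP k 2.
  have -> : k = 2 by lia. by [].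
have := leq_mul (leqnn k.+1) (IH k3'); rewrite [(k.+1)`!]factS; nia.
Qed.

Lemma ineq3 d n : 2 <= d -> 2 * d <= n -> d * (d - 1) * 'C(n - 2, d - 2) < 6 * n ^ (d - 2).
Proof.
move=> d2 dn; set k := d - 2; have -> : d = k + 2 by lia.
have -> : k + 2 - 1 = k + 1 by lia.
case: (posnP k) => [->|k1]; first by rewrite bin0.
have f0 : 0 < k`! := fact_gt0 k.
rewrite -(ltn_pmul2r f0).
have h1 := bin_pow (n - 2) k.
have h2 : (n - 2) ^ k < n ^ k by apply: pow_lt => //; lia.
have h3 := fact_b1 k1.
apply: (@leq_ltn_trans ((k + 2) * (k + 1) * (n - 2) ^ k)).
  by rewrite -mulnA leq_mul2l h1 orbT.
apply: (@leq_trans (6 * k`! * (n - 2) ^ k).+1).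
  by rewrite ltnS leq_mul2r h3 orbT.
apply: (@leq_trans (6 * k`! * (n ^ k))).
  by rewrite ltn_pmul2l // muln_gt0 f0.
by rewrite mulnAC.
Qed.

Lemma ineq2 d n : 3 <= d -> 2 * d <= n -> d * d * d * 'C(n - 3, d - 3) < 6 * n ^ (d - 2).
Proof.
move=> d3 dn; have [k ek] : exists k, d = k + 3 by exists (d - 3); lia.
subst d; have -> : k + 3 - 2 = k.+1 by lia.
have -> : k + 3 - 3 = k by lia.
clear d3; move: dn; case: k => [|[|[|k]]].
- move=> dn; rewrite bin0 expn1; lia.
- move=> dn; rewrite bin1 expnS expn1; nia.
- move=> dn; have h := bin_pow (n - 3) 2.
  set c := 'C(n - 3, 2) in h *.
  have t (m : nat) : 7 <= m -> 125 * (m*m) < 12 * ((m+3)*((m+3)*(m+3))).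
    move=> hm. have h1 : 7 * (m*m) <= m * (m*m) by rewrite leq_mul2r hm orbT. nia.
  have e := t (n - 3) ltac:(lia).
  have -> : n = n - 3 + 3 by lia.
  move: h e; rewrite !expnS expn0 /= !muln1; set m := n - 3; move=> h e.
  move: h e; rewrite (_ : 2`! = 2) //; set P := (m + 3) * _; set M := m * m; move=> h e.
  lia.
- move=> dn; set k' := k.+3.
  have k3 : 3 <= k' by [].
  have f0 : 0 < k'`! := fact_gt0 k'.
  rewrite -(ltn_pmul2r f0).
  have h1 := bin_pow (n - 3) k'.
  have h2 : (n - 3) ^ k' < n ^ k' by apply: pow_lt => //; lia.
  have h3 := fact_b2 k3.
  have h4 : (k' + 3) * (k' + 3) * (k' + 3) <= 6 * k'`! * n.
    have : 2 * (k' + 3) <= n by rewrite /k'; lia.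
    move: h3; rewrite expnS expn1; move: (k'`!) (k' + 3) => F K h3 h.
    have := leq_mul h3 h; nia.
  apply: (@leq_ltn_trans ((k' + 3) * (k' + 3) * (k' + 3) * (n - 3) ^ k')).
    by rewrite -mulnA leq_mul2l h1 orbT.
  apply: (@leq_trans (6 * k'`! * n * (n - 3) ^ k').+1).
    by rewrite ltnS leq_mul2r h4 orbT.
  apply: (@leq_trans (6 * k'`! * n * (n ^ k'))).
    have hp : 0 < 6 * k'`! * n by rewrite muln_gt0 (muln_gt0 6) f0; apply/andP; split => //; lia.
    by rewrite ltn_pmul2l.
  rewrite expnS; move: (k'`!) (n ^ k') => F P; nia.
Qed.

Lemma sum_bound (I : finType) (C : {set I}) (f : I -> nat) b :
  (forall z, z \in C -> f z <= b) -> \sum_(z in C) f z <= #|C| * b.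
Proof. by move=> h; rewrite -sum_nat_const; apply: leq_sum. Qed.

Lemma sum_boundH d n (H : {set {set 'I_n}}) (C : {set 'I_n}) (f : 'I_n -> nat) b :
  uniform d H -> C \in H ->
  (forall z, z \in C -> f z <= b) -> \sum_(z in C) f z <= d * b.
Proof. by move=> uH CH h; rewrite -(uH _ CH); apply: sum_bound. Qed.

Lemma star d n (H : {set {set 'I_n}}) :
  2 <= d -> 2 * d <= n -> uniform d H -> intersecting H ->
  6 * n ^ (d - 2) <= #|H| -> exists l, forall B, B \in H -> l \in B.
Proof.
move=> d2 dn uH iH hH.
case: (boolP [exists l, [forall B in H, l \in B]]) => [/existsP[l /forall_inP hl]|nex].
  by exists l.
exfalso.
have hC x : exists2 C, C \in H & x \notin C.
  by move/existsPn: nex => /(_ x) /forall_inPn.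
have [A AH] : exists A, A \in H.
  apply/card_gt0P; apply: leq_trans hH; rewrite muln_gt0 expn_gt0; lia.
have HN : #|H| = #|[set B in H | set0 \subset B]|.
  by apply: eq_card => B; rewrite inE sub0set andbT.
have c2 (S : {set 'I_n}) : #|S| = 2 -> #|[set B in H | S \subset B]| <= 'C(n - 2, d - 2).
  by move=> e; rewrite -e; apply: count_sup.
have c3 (S : {set 'I_n}) : #|S| = 3 ->
    #|[set B in H | S \subset B]| <= (d != 2) * 'C(n - 3, d - 3).
  move=> e; case: eqP => [ed|_]; last by rewrite mul1n -e; apply: count_sup.
  by rewrite (count_big uH) // e ed.
have stepx x : #|[set B in H | [set x] \subset B]| <= d * 'C(n - 2, d - 2).
  have [C CH xC] := hC x.
  apply: leq_trans (cover_step _ iH CH) _.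
  apply: (sum_boundH uH CH) => z zC; apply: c2.
  rewrite cardsU1 cards1 inE; have -> : z != x by apply: contraNneq xC => <-.
  by [].
case: (boolP [exists x, exists y, [forall B in H, (x \in B) || (y \in B)]]).
  case/existsP => x /existsP[y /forall_inP cov].
  have : #|H| <= d * 'C(n - 2, d - 2) + d * 'C(n - 2, d - 2).
    apply: leq_trans (leq_add (stepx x) (stepx y)).
    apply: leq_trans (leq_card_setU _ _).1; apply: subset_leq_card.
    apply/subsetP => B BH; rewrite !inE BH !sub1set /=; exact: cov.
  have [ed|d3] := eqVneq d 2.
    by subst d; move: hH; rewrite (_ : 2 - 2 = 0) // bin0 expn0; lia.
  have := ineq3 d2 dn; move: hH.
  have : 2 * d <= d * (d - 1) by nia.
  move: ('C(n - 2, d - 2)) (n ^ (d - 2)) => c p; nia.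
move/existsPn => ncov.
have hD x y : exists2 D, D \in H & (x \notin D) && (y \notin D).
  move: (ncov x) => /existsPn /(_ y) /forall_inPn [D DH].
  by rewrite negb_or => h; exists D.
have stepx2 x : #|[set B in H | [set x] \subset B]| <= d * (d * ((d != 2) * 'C(n - 3, d - 3))).
  have [C CH xC] := hC x.
  apply: leq_trans (cover_step _ iH CH) _.
  apply: (sum_boundH uH CH) => y yC.
  have yx : y != x by apply: contraNneq xC => <-.
  have [D DH /andP[yD xD]] := hD y x.
  apply: leq_trans (cover_step _ iH DH) _.
  apply: (sum_boundH uH DH) => z zD; apply: c3.
  have zy : z != y by apply: contraNneq yD => <-.
  have zx : z != x by apply: contraNneq xD => <-.
  by rewrite !cardsU1 cards1 !inE (negbTE zy) (negbTE zx) (negbTE yx).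
have : #|H| <= d * (d * (d * ((d != 2) * 'C(n - 3, d - 3)))).
  rewrite HN; apply: leq_trans (cover_step _ iH AH) _.
  apply: (sum_boundH uH AH) => x xA; rewrite setU0; exact: stepx2.
have [ed|d3] := eqVneq d 2; first by subst d; move: hH; rewrite (_ : 2 - 2 = 0) // expn0; lia.
have d3' : 3 <= d by lia.
have := ineq2 d3' dn; move: hH; rewrite /= mul1n.
move: ('C(n - 3, d - 3)) (n ^ (d - 2)) => c p; nia.
Qed.

Theorem lemma5p3 (d n : nat) (H : {set {set 'I_n}}) :
  2 <= d -> 2 * d <= n ->
  uniform d H -> intersecting H ->
  6 * n ^ (d - 2) <= #|H| ->
  exists (l : 'I_n) (A : 'I_d.+1 -> {set 'I_n}),
    (forall B, B \in H -> l \in B) /\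
    (forall i, A i \in H) /\
    (forall i j, i != j -> [disjoint (A i :\ l) & (A j :\ l)]).
Proof.
move=> d2 dn uH iH hH.
have [l hl] := star d2 dn uH iH hH.
exists l.
pose P (M : {set {set 'I_n}}) := (M \subset H) &&
  [forall A in M, forall B in M, (A != B) ==> [disjoint A :\ l & B :\ l]].
have P0 : P set0.
  by rewrite /P sub0set; apply/forall_inP => A; rewrite inE.
case: (@arg_maxnP _ set0 P (fun M => #|M|) P0) => M PM Mmax.
move: PM; rewrite /P => /andP[MH /forall_inP Mdis].
have Mdis' A B : A \in M -> B \in M -> A != B -> [disjoint A :\ l & B :\ l].
  by move=> AM BM; move: (Mdis A AM) => /forall_inP /(_ B BM) /implyP.
have cardl B : B \in H -> #|B :\ l| = d - 1.
  by move=> BH; move: (cardsD1 l B); rewrite (hl _ BH) (uH _ BH) /=; lia.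
case: (leqP d.+1 #|M|) => [big|small].
  exists (fun i : 'I_d.+1 => nth set0 (enum M) i).
  have sz : size (enum M) = #|M| by rewrite cardE.
  have inM (i : 'I_d.+1) : nth set0 (enum M) i \in M.
    by rewrite -mem_enum; apply: mem_nth; rewrite sz; apply: leq_trans big.
  split; first exact: hl.
  split; first by move=> i; apply: (subsetP MH); exact: inM.
  move=> i j ij; apply: Mdis'; try exact: inM.
  rewrite nth_uniq ?sz ?enum_uniq //; try (apply: leq_trans big; exact: ltn_ord).
exfalso.
set U := \bigcup_(A in M) (A :\ l).
have cov B : B \in H -> exists2 u, u \in U & u \in B.
  move=> BH; case: (boolP [exists u in U, u \in B]) => [/exists_inP[u uU uB]|nU].
    by exists u.
  move/exists_inPn: nU => nU.
  have BM : B \notin M.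
    apply/negP => BM.
    have : 0 < #|B :\ l| by rewrite (cardl _ BH); lia.
    case/card_gt0P => u uB.
    have uU : u \in U by apply/bigcupP; exists B.
    by move: (nU u uU); rewrite (subsetP (subsetDl B [set l]) u uB).
  have : P (B |: M).
    rewrite /P subUset sub1set BH MH /=.
    apply/forall_inP => A1 /setU1P A1M; apply/forall_inP => A2 /setU1P A2M.
    apply/implyP => ne.
    have dB A : A \in M -> [disjoint B :\ l & A :\ l].
      move=> AM; apply/pred0P => x /=; apply/negbTE/negP => /andP[xB xA].
      have xU : x \in U by apply/bigcupP; exists A.
      by move: (nU x xU); rewrite (subsetP (subsetDl B [set l]) x xB).
    case: A1M => [e1|A1M]; case: A2M => [e2|A2M].
    - by move: ne; rewrite e1 e2 eqxx.
    - by rewrite e1; apply: dB.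
    - by rewrite e2 disjoint_sym; apply: dB.
    - exact: Mdis'.
  move/Mmax; rewrite cardsU1 BM /=; lia.
have : #|H| <= #|U| * 'C(n - 2, d - 2).
  have : H \subset \bigcup_(u in U) [set B in H | u |: [set l] \subset B].
    apply/subsetP => B BH; have [u uU uB] := cov B BH.
    by apply/bigcupP; exists u => //; rewrite inE BH subUset !sub1set uB hl.
  move/subset_leq_card => h; apply: leq_trans h _.
  apply: leq_trans (card_bigcup_le _ _) _; apply: sum_bound => u uU.
  have ul : u != l.
    by move: uU => /bigcupP[A _]; rewrite !inE => /andP[].
  by apply: leq_trans (count_sup _ uH) _; rewrite cardsU1 cards1 inE ul.
have : #|U| <= d * (d - 1).
  apply: leq_trans (card_bigcup_le _ _) _.
  apply: (@leq_trans (#|M| * (d - 1))).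
    by apply: sum_bound => A AM; rewrite cardl //; apply: (subsetP MH).
  by rewrite leq_mul2r -ltnS small orbT.
have := ineq3 d2 dn; move: hH.
move: ('C(n - 2, d - 2)) (n ^ (d - 2)) #|U| => c p u; nia.
Qed.
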